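(* Let $n,m$ be positive integers and let $a^j_i, c^{x,j}_i, c^{y,j}_i, b_j \in \mathbb{R}$ be given for $i\in[n]$, $j\in\{0\}\cup[m]$ (with $b_j$ only for $j\in[m]$). Consider the following two optimization problems in the variables $x,y\in\mathbb{R}^n$, $u\in\mathbb{R}^{2n}$ and $w=(w_{i,k})_{(i,k)\in[2n]\times[2n]}$. McCormick relaxation: $$z_{Mc}:=\min \sum_{i\in[n]} a^0_i w_{i,n+i}+\sum_{i\in[n]}c^{x,0}_i x_i+\sum_{i\in[n]}c^{y,0}_i y_i$$ subject to (C1) $\sum_{i\in[n]} a^j_i w_{i,n+i}+\sum_{i\in[n]}c^{x,j}_i x_i+\sum_{i\in[n]}c^{y,j}_i y_i\ge b_j$ for all $j\in[m]$; (C2) $x_i=u_i$ and $y_i=u_{n+i}$ for all $i\in[n]$; (C3) $u\in[0,1]^{2n}$; (C4) $\max\{0,u_i+u_k-1\}\le w_{i,k}\le \min\{u_i,u_k\}$ for all $(i,k)\in[2n]\times[2n]$. McCormick+SDP relaxation: $$z_{MS}:=\min \sum_{i\in[n]} a^0_i w_{i,n+i}+\sum_{i\in[n]}c^{x,0}_i x_i+\sum_{i\in[n]}c^{y,0}_i y_i$$ subject to (C1)–(C4) and the constraint that the $(2n+1)\times(2n+1)$ matrix $$W:=\begin{bmatrix}1 & u^\top\\ u & w\end{bmatrix}$$ is (symmetric) positive semidefinite. Then either both problems are infeasible, or both are feasible and $z_{Mc}=z_{MS}$.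
   Context: These two problems are relaxations of the quadratically constrained program $\min \sum_i a^0_i x_iy_i+\sum_i c^{x,0}_ix_i+\sum_i c^{y,0}_iy_i$ s.t. $\sum_i a^j_i x_iy_i+\sum_i c^{x,j}_ix_i+\sum_i c^{y,j}_iy_i\ge b_j$ for $j\in[m]$, $x,y\in[0,1]^n$, where $w_{i,k}$ stands for the product $u_iu_k$ with $u=(x,y)$. Here $[n]=\{1,\dots,n\}$. *)

(* Defs.v *)
From HB Require Import structures.
From mathcomp Require Import all_boot all_order all_algebra.
From mathcomp Require Import reals.
Set Implicit Arguments. Unset Strict Implicit. Unset Printing Implicit Defensive.
Import Order.TTheory GRing.Theory Num.Theory.
Local Open Scope ring_scope.

Definition psd (R : realType) (k : nat) (M : 'M[R]_k) : Prop :=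
  M^T = M /\ forall v : 'cV[R]_k, 0 <= (v^T *m M *m v) 0 0.

Section Relax.
Variables (R : realType) (n m : nat).
Variables (a0 cx0 cy0 : 'I_n -> R) (a cx cy : 'I_m -> 'I_n -> R) (b : 'I_m -> R).

(* indices: i in [n] is lshift n i (x-part), n+i is rshift n i (y-part) of 'I_(n+n) *)
Definition xpart (u : 'cV[R]_(n + n)) (i : 'I_n) : R := u (lshift n i) 0.
Definition ypart (u : 'cV[R]_(n + n)) (i : 'I_n) : R := u (rshift n i) 0.

Definition objective (x y : 'I_n -> R) (w : 'M[R]_(n + n)) : R :=
  \sum_(i < n) a0 i * w (lshift n i) (rshift n i)
  + \sum_(i < n) cx0 i * x i + \sum_(i < n) cy0 i * y i.

Definition mccormick_feasible (x y : 'I_n -> R) (u : 'cV[R]_(n + n))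
    (w : 'M[R]_(n + n)) : Prop :=
  (forall j : 'I_m,
     \sum_(i < n) a j i * w (lshift n i) (rshift n i)
     + \sum_(i < n) cx j i * x i + \sum_(i < n) cy j i * y i >= b j)
  /\ (forall i : 'I_n, x i = xpart u i /\ y i = ypart u i)
  /\ (forall i : 'I_(n + n), 0 <= u i 0 <= 1)
  /\ (forall i k : 'I_(n + n),
        Num.max 0 (u i 0 + u k 0 - 1) <= w i k <= Num.min (u i 0) (u k 0)).

Definition Wmat (u : 'cV[R]_(n + n)) (w : 'M[R]_(n + n)) : 'M[R]_(1 + (n + n)) :=
  block_mx (1%:M : 'M[R]_1) u^T u w.

Definition mcsdp_feasible (x y : 'I_n -> R) (u : 'cV[R]_(n + n))
    (w : 'M[R]_(n + n)) : Prop :=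
  mccormick_feasible x y u w /\ psd (Wmat u w).

Definition is_min_value
    (F : ('I_n -> R) -> ('I_n -> R) -> 'cV[R]_(n + n) -> 'M[R]_(n + n) -> Prop)
    (z : R) : Prop :=
  (exists x y u w, F x y u w /\ objective x y w = z)
  /\ (forall x y u w, F x y u w -> z <= objective x y w).

Definition feasible
    (F : ('I_n -> R) -> ('I_n -> R) -> 'cV[R]_(n + n) -> 'M[R]_(n + n) -> Prop) : Prop :=
  exists x y u w, F x y u w.
End Relax.

(* Main.v *)
From HB Require Import structures.
From mathcomp Require Import all_boot all_order all_algebra.
From mathcomp Require Import reals.
From mathcomp Require Import all_classical all_reals all_analysis.
From mathcomp Require Import ring lra.
Require Import Defs.
Set Implicit Arguments. Unset Strict Implicit. Unset Printing Implicit Defensive.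
Import Order.TTheory GRing.Theory Num.Theory.
Import numFieldNormedType.Exports.
Local Open Scope classical_set_scope.
Local Open Scope ring_scope.

Lemma mc_bounds (R : realType) (x y w : R) :
  (Num.max 0 (x + y - 1) <= w <= Num.min x y) =
  [&& 0 <= w, x + y - 1 <= w, w <= x & w <= y].
Proof. by rewrite ge_max le_min !andbA. Qed.

Lemma psd2 (R : realType) (x y t z1 z2 : R) : 0 <= x <= 1 -> 0 <= y <= 1 ->
  0 <= t -> x + y - 1 <= t -> t <= x -> t <= y ->
  0 <= (z1 * (x - x * x) * z1 + z1 * (t - x * y) * z2) +
       (z2 * (y - y * y) * z2 + z2 * (t - y * x) * z1).
Proof.
move=> /andP[x0 x1] /andP[y0 y1] t0 t1 t2 t3.
set A := x - x * x; set B := y - y * y; set C := t - x * y.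
have A0 : 0 <= A by rewrite /A; nra.
have B0 : 0 <= B by rewrite /B; nra.
have CC : C * C <= A * B.
  rewrite /A /B /C; case: (lerP (x * y) t) => h.
  - have h1 : t - x * y <= x * (1 - y) by lra.
    have h2 : t - x * y <= y * (1 - x) by lra.
    have h3 : 0 <= t - x * y by lra.
    have h4 : 0 <= x * (1 - y) by nra.
    nra.
  - have h1 : x * y - t <= x * y by lra.
    have h2 : x * y - t <= (1 - x) * (1 - y) by lra.
    have h3 : 0 <= x * y - t by lra.
    have h4 : 0 <= x * y by nra.
    nra.
have -> : (z1 * (x - x * x) * z1 + z1 * (t - x * y) * z2) +
       (z2 * (y - y * y) * z2 + z2 * (t - y * x) * z1) =
       A * z1 * z1 + 2 * C * z1 * z2 + B * z2 * z2 by rewrite /A /B /C; ring.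
have [A00|Apos] := eqVneq A 0.
  have C0 : C = 0 by apply/eqP; rewrite -sqrf_eq0 eq_le sqr_ge0 andbT expr2; nra.
  rewrite A00 C0; nra.
have Ap : 0 < A by rewrite lt_def Apos A0.
have : 0 <= A * (A * z1 * z1 + 2 * C * z1 * z2 + B * z2 * z2).
  have -> : A * (A * z1 * z1 + 2 * C * z1 * z2 + B * z2 * z2) =
    (A * z1 + C * z2) ^+ 2 + (A * B - C * C) * z2 ^+ 2 by ring.
  apply: addr_ge0; first exact: sqr_ge0.
  by apply: mulr_ge0; [lra | exact: sqr_ge0].
by rewrite pmulr_rge0.
Qed.

Lemma quadE (R : realType) k (M : 'M[R]_k) (v : 'cV[R]_k) :
  (v^T *m M *m v) 0 0 = \sum_a \sum_b v a 0 * M a b * v b 0.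
Proof.
rewrite mxE; under eq_bigr do rewrite mxE big_distrl.
rewrite exchange_big; apply: eq_bigr => a _; apply: eq_bigr => b _.
by rewrite !mxE.
Qed.

Section Aux.
Variables (R : realType) (n : nat).

Definition partner (p : 'I_(n+n)) : 'I_(n+n) :=
  match fintype.split p with inl i => rshift n i | inr i => lshift n i end.
Definition pidx (p : 'I_(n+n)) : 'I_n :=
  match fintype.split p with inl i => i | inr i => i end.

Lemma splitL (i : 'I_n) : fintype.split (lshift n i) = inl i.
Proof. exact: (unsplitK (inl _ i)). Qed.
Lemma splitR (i : 'I_n) : fintype.split (rshift n i) = inr i.
Proof. exact: (unsplitK (inr _ i)). Qed.

Lemma partnerL i : partner (lshift n i) = rshift n i.
Proof. by rewrite /partner splitL. Qed.
Lemma partnerR i : partner (rshift n i) = lshift n i.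
Proof. by rewrite /partner splitR. Qed.
Lemma pidxL i : pidx (lshift n i) = i.
Proof. by rewrite /pidx splitL. Qed.
Lemma pidxR i : pidx (rshift n i) = i.
Proof. by rewrite /pidx splitR. Qed.
Lemma partnerK p : partner (partner p) = p.
Proof. rewrite -(splitK p); case: (fintype.split p) => i /=; [by rewrite partnerL partnerR | by rewrite partnerR partnerL]. Qed.
Lemma pidx_partner p : pidx (partner p) = pidx p.
Proof. by rewrite -(splitK p); case: (fintype.split p) => i /=; rewrite ?partnerL ?partnerR ?pidxL ?pidxR. Qed.
Lemma partner_neq p : partner p != p.
Proof. by rewrite -(splitK p); case: (fintype.split p) => i /=; rewrite ?partnerL ?partnerR eq_shift. Qed.

Definition wmk (u : 'cV[R]_(n+n)) (t : 'I_n -> R) : 'M[R]_(n+n) :=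
  \matrix_(p, q) if p == q then u p 0 else if q == partner p then t (pidx p)
                 else u p 0 * u q 0.

Lemma partner_sym p q : (q == partner p) = (p == partner q).
Proof. by apply/eqP/eqP => ->; rewrite partnerK. Qed.

Lemma wmk_tr u t : (wmk u t)^T = wmk u t.
Proof.
apply/matrixP => p q; rewrite !mxE eq_sym.
case: eqVneq => [->//|npq].
rewrite partner_sym; case: eqVneq => [->|_]; last by rewrite mulrC.
by rewrite pidx_partner.
Qed.

Lemma wmk_psd (u : 'cV[R]_(n+n)) t :
  (forall p, 0 <= u p 0 <= 1) ->
  (forall i, [&& 0 <= t i, u (lshift n i) 0 + u (rshift n i) 0 - 1 <= t i,
               t i <= u (lshift n i) 0 & t i <= u (rshift n i) 0]) ->
  psd (Wmat u (wmk u t)).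
Proof.
move=> hu ht; split.
  by rewrite /Wmat tr_block_mx trmxK tr_scalar_mx wmk_tr.
move=> v; rewrite quadE big_split_ord /= big_ord1.
rewrite big_split_ord /= big_ord1.
under [X in _ + X]eq_bigr do rewrite big_split_ord /= big_ord1.
rewrite big_split /=.
rewrite /Wmat block_mxEul.
under eq_bigr do rewrite block_mxEur.
under [X in _ + (X + _)]eq_bigr do rewrite block_mxEdl.
under [X in _ + (_ + X)]eq_bigr do under eq_bigr do rewrite block_mxEdr.
set s := v (lshift (n + n) 0) 0.
rewrite mxE /= mulr1.
under eq_bigr do rewrite mxE.
set S := \sum_(p < n + n) u p 0 * v (rshift 1 p) 0.
have h1 : \sum_(i < n + n) s * u i ord0 * v (rshift 1 i) 0 = s * S.
  by rewrite /S mulr_sumr; apply: eq_bigr => i _; rewrite mulrA.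
have h2 : \sum_(i < n + n) v (rshift 1 i) 0 * u i ord0 * s = s * S.
  by rewrite /S mulr_sumr; apply: eq_bigr => i _; ring.
set T := \sum_(p < n + n) \sum_(q < n + n)
   v (rshift 1 p) 0 * (wmk u t p q - u p 0 * u q 0) * v (rshift 1 q) 0.
have h3 : \sum_(i < n + n)
      \sum_(i0 < n + n) v (rshift 1 i) 0 * wmk u t i i0 * v (rshift 1 i0) 0
   = S * S + T.
  rewrite /T /S mulr_suml -big_split; apply: eq_bigr => p _ /=.
  rewrite mulr_sumr -big_split; apply: eq_bigr => q _; rewrite /=; ring.
have hT : 0 <= T.
  have inner p : \sum_(q < n + n)
     v (rshift 1 p) 0 * (wmk u t p q - u p 0 * u q 0) * v (rshift 1 q) 0 =
     (v (rshift 1 p) 0 * (u p 0 - u p 0 * u p 0) * v (rshift 1 p) 0 +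
     v (rshift 1 p) 0 * (t (pidx p) - u p 0 * u (partner p) 0) * v (rshift 1 (partner p)) 0).
    rewrite (bigD1 p) //= (bigD1 (partner p)) /=; last exact: partner_neq.
    rewrite big1 ?addr0; last first.
      move=> q /andP[hq1 hq2]; rewrite mxE eq_sym (negbTE hq1) (negbTE hq2).
      by rewrite subrr mulr0 mul0r.
    by rewrite !mxE eqxx eq_sym (negbTE (partner_neq p)) eqxx.
  rewrite /T (eq_bigr _ (fun p _ => inner p)) big_split_ord /= -big_split.
  apply: sumr_ge0 => i _; rewrite partnerL partnerR pidxL pidxR.
  have /and4P[t0 t1 t2 t3] := ht i.
  exact: psd2 (hu _) (hu _) t0 t1 t2 t3.
rewrite h1 h2 h3.
have := sqr_ge0 (s + S); rewrite expr2 => hsq.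
nra.
Qed.
End Aux.

Section Main.
Variables (R : realType) (n m : nat).
Variables (a0 cx0 cy0 : 'I_n -> R) (a cx cy : 'I_m -> 'I_n -> R) (b : 'I_m -> R).

Local Notation V := 'rV[R]_((n + n) + n).

Definition xv (v : V) i := v ord0 (lshift n (lshift n i)).
Definition yv (v : V) i := v ord0 (lshift n (rshift n i)).
Definition tv (v : V) i := v ord0 (rshift (n + n) i).
Definition linj j (v : V) := \sum_(i < n) a j i * tv v i
  + \sum_(i < n) cx j i * xv v i + \sum_(i < n) cy j i * yv v i.
Definition objv (v : V) := \sum_(i < n) a0 i * tv v i
  + \sum_(i < n) cx0 i * xv v i + \sum_(i < n) cy0 i * yv v i.

Definition box := [set v : V | forall k, (fun _ => `[(0:R), 1]%classic) k (v ord0 k)].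
Definition Kset := [set v : V | forall i, 0 <= tv v i]
  `&` [set v : V | forall i, 0 <= tv v i - xv v i - yv v i + 1]
  `&` [set v : V | forall i, 0 <= xv v i - tv v i]
  `&` [set v : V | forall i, 0 <= yv v i - tv v i]
  `&` [set v : V | forall j, 0 <= linj j v - b j].
Definition Sset := box `&` Kset.

Lemma cont_coord k : continuous (fun v : V => v ord0 k).
Proof. exact: coord_continuous. Qed.

Lemma cont_add (f g : V -> R) : continuous f -> continuous g ->
  continuous (fun v => f v + g v).
Proof. by move=> hf hg x; exact: (continuousD (hf x) (hg x)). Qed.

Lemma cont_sub (f g : V -> R) : continuous f -> continuous g ->
  continuous (fun v => f v - g v).
Proof. by move=> hf hg x; exact: (continuousB (hf x) (hg x)). Qed.

Lemma cont_cmul c (f : V -> R) : continuous f -> continuous (fun v => c * f v).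
Proof. move=> hf x; apply: (@continuousM _ _ (fun=> c) f x); [exact: cst_continuous | exact: hf]. Qed.

Lemma cont_sum (I : Type) (s : seq I) (F : I -> V -> R) :
  (forall i, continuous (F i)) -> continuous (fun v => \sum_(i <- s) F i v).
Proof.
move=> hF; elim: s => [|x s IH].
  have -> : (fun v : V => \sum_(i <- [::]) F i v) = (fun=> 0) by apply: funext => v; rewrite big_nil.
  exact: cst_continuous.
have -> : (fun v => \sum_(i <- x :: s) F i v) = (fun v => F x v + \sum_(i <- s) F i v).
  by apply: funext => v; rewrite big_cons.
exact: cont_add.
Qed.

Lemma closed_ge0 (I : Type) (g : I -> V -> R) : (forall i, continuous (g i)) ->
  closed [set v | forall i, 0 <= g i v].
Proof.
move=> hg.
have -> : [set v | forall i, 0 <= g i v] = \bigcap_(i in setT) (g i @^-1` [set x | 0 <= x]).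
  apply/funext => v; apply/propext; split => [h i _|h i]; first exact: h.
  exact: (h i Logic.I).
apply: closed_bigI => i _; apply: preimage_closed; last exact: closed_ge.
by move=> x _; exact: hg.
Qed.

Lemma cont_lin (p q r : 'I_n -> R) : continuous (fun v => \sum_(i < n) p i * tv v i
  + \sum_(i < n) q i * xv v i + \sum_(i < n) r i * yv v i).
Proof.
apply: cont_add; first apply: cont_add.
all: by apply: cont_sum => i; apply: cont_cmul; exact: cont_coord.
Qed.

Lemma compact_S : compact Sset.
Proof.
apply: compact_closedI.
  by apply: rV_compact => _; exact: segment_compact.
repeat apply: closedI.
- by apply: closed_ge0 => i; exact: cont_coord.
- apply: closed_ge0 => i; apply: cont_add; last exact: cst_continuous.
  by apply: cont_sub; [apply: cont_sub|]; exact: cont_coord.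
- by apply: closed_ge0 => i; apply: cont_sub; exact: cont_coord.
- by apply: closed_ge0 => i; apply: cont_sub; exact: cont_coord.
- apply: closed_ge0 => j; apply: cont_sub; last exact: cst_continuous.
  exact: cont_lin.
Qed.

Lemma cont_obj : continuous objv.
Proof. exact: cont_lin. Qed.


Definition proj (u : 'cV[R]_(n + n)) (w : 'M[R]_(n + n)) : V :=
  row_mx u^T (\row_i w (lshift n i) (rshift n i)).

Lemma proj_x u w i : xv (proj u w) i = u (lshift n i) 0.
Proof. by rewrite /xv /proj row_mxEl mxE. Qed.
Lemma proj_y u w i : yv (proj u w) i = u (rshift n i) 0.
Proof. by rewrite /yv /proj row_mxEl mxE. Qed.
Lemma proj_t u w i : tv (proj u w) i = w (lshift n i) (rshift n i).
Proof. by rewrite /tv /proj row_mxEr mxE. Qed.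

Lemma proj_S x y u w : mccormick_feasible a cx cy b x y u w ->
  Sset (proj u w) /\ objv (proj u w) = objective a0 cx0 cy0 x y w.
Proof.
move=> [C1 [C2 [C3 C4]]].
have hx i : xv (proj u w) i = x i by rewrite proj_x (proj1 (C2 i)).
have hy i : yv (proj u w) i = y i by rewrite proj_y (proj2 (C2 i)).
have ht i : tv (proj u w) i = w (lshift n i) (rshift n i) by rewrite proj_t.
have hw i : [&& 0 <= w (lshift n i) (rshift n i),
    u (lshift n i) 0 + u (rshift n i) 0 - 1 <= w (lshift n i) (rshift n i),
    w (lshift n i) (rshift n i) <= u (lshift n i) 0 & w (lshift n i) (rshift n i) <= u (rshift n i) 0].
  by rewrite -mc_bounds; exact: C4.
have hxr i : x i = u (lshift n i) 0 by rewrite (proj1 (C2 i)).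
have hyr i : y i = u (rshift n i) 0 by rewrite (proj2 (C2 i)).
split; last first.
  rewrite /objv /objective.
  by congr (_ + _ + _); apply: eq_bigr => i _; rewrite ?hx ?hy ?ht.
split.
  move=> k /=; rewrite -(splitK k); case: (fintype.split k) => p /=.
    by rewrite /proj row_mxEl mxE in_itv /=; exact: C3.
  rewrite /proj row_mxEr mxE in_itv /=.
  have /and4P[h1 h2 h3 h4] := hw p; have /andP[h5 h6] := C3 (lshift n p).
  by apply/andP; split => //; apply: le_trans h6.
rewrite /Kset; split; [split; [split; [split|]|]|] => i /=.
- by rewrite ht; have /and4P[] := hw i.
- rewrite ht hx hy hxr hyr; have /and4P[h1 h2 h3 h4] := hw i; lra.
- rewrite ht hx hxr; have /and4P[h1 h2 h3 h4] := hw i; lra.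
- rewrite ht hy hyr; have /and4P[h1 h2 h3 h4] := hw i; lra.
- rewrite subr_ge0 /linj.
  have -> : \sum_(i0 < n) a i i0 * tv (proj u w) i0 + \sum_(i0 < n) cx i i0 * xv (proj u w) i0 +
    \sum_(i0 < n) cy i i0 * yv (proj u w) i0 =
    \sum_(i0 < n) a i i0 * w (lshift n i0) (rshift n i0) + \sum_(i0 < n) cx i i0 * x i0 +
    \sum_(i0 < n) cy i i0 * y i0.
    by congr (_ + _ + _); apply: eq_bigr => k _; rewrite ?hx ?hy ?ht.
  exact: C1.
Qed.

Definition ustar (c : V) : 'cV[R]_(n + n) := \col_p c ord0 (lshift n p).

Lemma star_feas (c : V) : Sset c ->
  mcsdp_feasible a cx cy b (xpart (ustar c)) (ypart (ustar c)) (ustar c) (wmk (ustar c) (tv c))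
  /\ objective a0 cx0 cy0 (xpart (ustar c)) (ypart (ustar c)) (wmk (ustar c) (tv c)) = objv c.
Proof.
move=> [hbox [[[[K1 K2] K3] K4] K5]].
have hu p : 0 <= ustar c p 0 <= 1.
  by rewrite mxE; have := hbox (lshift n p); rewrite /= in_itv.
have hxp i : xpart (ustar c) i = xv c i by rewrite /xpart mxE.
have hyp i : ypart (ustar c) i = yv c i by rewrite /ypart mxE.
have hul i : ustar c (lshift n i) 0 = xv c i by rewrite mxE.
have hur i : ustar c (rshift n i) 0 = yv c i by rewrite mxE.
have hwt i : wmk (ustar c) (tv c) (lshift n i) (rshift n i) = tv c i.
  by rewrite mxE eq_shift partnerL eqxx pidxL.
have ht i : [&& 0 <= tv c i, ustar c (lshift n i) 0 + ustar c (rshift n i) 0 - 1 <= tv c i,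
               tv c i <= ustar c (lshift n i) 0 & tv c i <= ustar c (rshift n i) 0].
  rewrite hul hur; have := K1 i; have := K2 i; have := K3 i; have := K4 i; rewrite /=.
  move=> h4 h3 h2 h1; apply/and4P; split; lra.
split; last first.
  rewrite /objv /objective.
  by congr (_ + _ + _); apply: eq_bigr => i _; rewrite ?hxp ?hyp ?hwt.
split; last exact: wmk_psd.
split.
  move=> j; have := K5 j; rewrite /= subr_ge0 /linj.
  suff -> : \sum_(i < n) a j i * wmk (ustar c) (tv c) (lshift n i) (rshift n i) +
    \sum_(i < n) cx j i * xpart (ustar c) i + \sum_(i < n) cy j i * ypart (ustar c) i =
    \sum_(i < n) a j i * tv c i + \sum_(i < n) cx j i * xv c i +
    \sum_(i < n) cy j i * yv c i by [].
  by congr (_ + _ + _); apply: eq_bigr => i _; rewrite ?hxp ?hyp ?hwt.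
split; first by [].
split; first exact: hu.
move=> p q; rewrite mc_bounds mxE.
have /andP[p0 p1] := hu p; have /andP[q0 q1] := hu q.
case: eqVneq => [<-|npq]; first by apply/and4P; split; lra.
case: eqVneq => [->|nq]; last by apply/and4P; split; nra.
move: p0 p1 npq; rewrite -(splitK p); case: (fintype.split p) => i /=;
  rewrite ?partnerL ?partnerR ?pidxL ?pidxR => p0 p1 _; have /and4P[h1 h2 h3 h4] := ht i;
  apply/and4P; split; lra.
Qed.

Theorem main_aux (hn : (0 < n)%N) (hm : (0 < m)%N) :
  (~ feasible (mccormick_feasible a cx cy b)
   /\ ~ feasible (mcsdp_feasible a cx cy b))
  \/
  (feasible (mccormick_feasible a cx cy b)
   /\ feasible (mcsdp_feasible a cx cy b)
   /\ exists z : R,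
        is_min_value a0 cx0 cy0 (mccormick_feasible a cx cy b) z
        /\ is_min_value a0 cx0 cy0 (mcsdp_feasible a cx cy b) z).
Proof.
have [[x [y [u [w F]]]]|nF] := pselect (feasible (mccormick_feasible a cx cy b)); last first.
  left; split => // -[x [y [u [w [F _]]]]]; apply: nF; by exists x, y, u, w.
right.
have [S0 _] := proj_S F.
have [c cS cmin] := @compact_EVT_min _ _ objv Sset (ex_intro _ _ S0) compact_S
   (@continuous_subspaceT _ _ Sset objv cont_obj).
rewrite inE in cS.
have [[F1 F2] Fo] := star_feas cS.
split; first by exists (xpart (ustar c)), (ypart (ustar c)), (ustar c), (wmk (ustar c) (tv c)).
split; first by exists (xpart (ustar c)), (ypart (ustar c)), (ustar c), (wmk (ustar c) (tv c)).
have lb x' y' u' w' : mccormick_feasible a cx cy b x' y' u' w' ->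
    objv c <= objective a0 cx0 cy0 x' y' w'.
  move=> F'; have [S' <-] := proj_S F'; apply: cmin; by rewrite inE.
exists (objv c); split; split.
- by exists (xpart (ustar c)), (ypart (ustar c)), (ustar c), (wmk (ustar c) (tv c)).
- exact: lb.
- by exists (xpart (ustar c)), (ypart (ustar c)), (ustar c), (wmk (ustar c) (tv c)).
- by move=> x' y' u' w' H; exact: (lb _ _ _ _ (proj1 H)).
Qed.

End Main.

Theorem mainTheorem1 (R : realType) (n m : nat) (hn : (0 < n)%N) (hm : (0 < m)%N)
    (a0 cx0 cy0 : 'I_n -> R) (a cx cy : 'I_m -> 'I_n -> R) (b : 'I_m -> R) :
  (~ feasible (mccormick_feasible a cx cy b)
   /\ ~ feasible (mcsdp_feasible a cx cy b))
  \/
  (feasible (mccormick_feasible a cx cy b)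
   /\ feasible (mcsdp_feasible a cx cy b)
   /\ exists z : R,
        is_min_value a0 cx0 cy0 (mccormick_feasible a cx cy b) z
        /\ is_min_value a0 cx0 cy0 (mcsdp_feasible a cx cy b) z).
Proof. exact: main_aux. Qed.
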